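(* Let $G$ be a connected graph on $n$ vertices $1,2,\ldots,n$ with incidence matrix $M$ and let $M^+$ be the Moore-Penrose inverse of $M$. (a) If $G$ has an odd cycle, then $MM^+=I_n$. (b) If $G$ has no odd cycles (i.e., $G$ is bipartite), then $MM^+=I_n-\frac{1}{n}[(-1)^{d(i,j)}]$, where $[(-1)^{d(i,j)}]$ denotes the $n\times n$ matrix whose $(i,j)$-entry is $(-1)^{d(i,j)}$.
   Context: The incidence matrix $M$ of a graph with vertices $1,\ldots,n$ and edges $e_1,\ldots,e_m$ is the $n\times m$ matrix with $(i,j)$-entry $1$ if vertex $i$ is incident with $e_j$ and $0$ otherwise. $d(i,j)$ is the graph distance. The Moore-Penrose inverse of a real matrix $A$ is the unique $A^+$ with $AA^+A=A$, $A^+AA^+=A^+$, $(AA^+)^T=AA^+$, $(A^+A)^T=A^+A$. *)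

(* Defs.v *)
From HB Require Import structures.
From mathcomp Require Import all_boot all_order all_algebra.
Set Implicit Arguments. Unset Strict Implicit. Unset Printing Implicit Defensive.
Import Order.TTheory GRing.Theory Num.Theory.
Local Open Scope ring_scope.

Definition simple_edges (n m : nat) (E : 'I_m -> {set 'I_n}) : Prop :=
  (forall e, #|E e| = 2%N) /\ injective E.

Definition adj (n m : nat) (E : 'I_m -> {set 'I_n}) : rel 'I_n :=
  fun i k => (i != k) && [exists e : 'I_m, E e == [set i; k]].

Definition connected_graph (n m : nat) (E : 'I_m -> {set 'I_n}) : Prop :=
  forall i j : 'I_n, connect (adj E) i j.

Definition has_odd_cycle (n m : nat) (E : 'I_m -> {set 'I_n}) : Prop :=
  exists c : seq 'I_n, [/\ ucycle (adj E) c, (3 <= size c)%N & odd (size c)].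

Definition incidence (R : pzRingType) (n m : nat) (E : 'I_m -> {set 'I_n})
  : 'M[R]_(n, m) := \matrix_(i < n, j < m) (if i \in E j then 1 else 0).

Definition walk_len (n m : nat) (E : 'I_m -> {set 'I_n}) (k : nat) (i j : 'I_n)
  : bool := [exists p : k.-tuple 'I_n, path (adj E) i p && (last i p == j)].

(* graph distance: the least k with a walk of length k from i to j
   (equals n if no such k < n exists, which does not happen for connected G) *)
Definition dist (n m : nat) (E : 'I_m -> {set 'I_n}) (i j : 'I_n) : nat :=
  find (fun k => walk_len E k i j) (iota 0 n).

Definition is_MP_inverse (R : numFieldType) (p q : nat)
  (A : 'M[R]_(p, q)) (X : 'M[R]_(q, p)) : Prop :=
  [/\ A *m X *m A = A, X *m A *m X = X,
      (A *m X)^T = A *m X & (X *m A)^T = X *m A].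

(* Main.v *)
Require Import Defs.
From HB Require Import structures.
From mathcomp Require Import all_boot all_order all_algebra.
From mathcomp Require Import ring lra zify.
Import Order.TTheory GRing.Theory Num.Theory.
Local Open Scope ring_scope.
Set Implicit Arguments. Unset Strict Implicit.

Section Comb.
Variables (n m : nat) (E : 'I_m -> {set 'I_n}).

Lemma adj_sym : symmetric (adj E).
Proof.
move=> i k; rewrite /adj eq_sym; congr (_ && _).
by apply/existsP/existsP=> -[e /eqP he]; exists e; rewrite he setUC.
Qed.

Lemma adj_irr i : adj E i i = false.
Proof. by rewrite /adj eqxx. Qed.

Lemma cycle_split {T : eqType} {e : rel T} {x a b} :
  cycle e (x :: a ++ x :: b) -> cycle e (x :: a) && cycle e (x :: b).
Proof.
rewrite /= rcons_cat cat_path /= !rcons_path.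
by case/and3P => -> /= -> ->.
Qed.

Lemma not_uniq_split {T : eqType} {c : seq T} : ~~ uniq c ->
  exists a x b1 b2, c = a ++ x :: b1 ++ x :: b2.
Proof.
elim: c => [|y s IH] //=; rewrite negb_and negbK; case/orP.
  by case/splitPr=> b1 b2; exists [::], y, b1, b2.
by move/IH=> [a [x [b1 [b2 ->]]]]; exists (y :: a), x, b1, b2.
Qed.

Lemma odd_cycle_ucycle k : forall c : seq 'I_n, (size c <= k)%N ->
  cycle (adj E) c -> odd (size c) -> has_odd_cycle E.
Proof.
elim: k => [|k IH] c.
  by rewrite leqn0 => /eqP/size0nil ->.
move=> hs hc ho.
case hu: (uniq c).
  exists c; split => //; first by rewrite /ucycle hc hu.
  by case: c hc ho {hs hu} => [|x [|y [|z c]]] //=; rewrite adj_irr.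
move/negbT/not_uniq_split: hu => [a [x [b1 [b2 ec]]]].
have hr : cycle (adj E) (x :: b1 ++ x :: (b2 ++ a)).
  by move: hc; rewrite -(rot_cycle (size a)) ec rot_size_cat /= -catA.
case/andP: (cycle_split hr) => c1 c2.
have hsz: size c = (size (x::b1) + size (x::(b2++a)))%N.
  rewrite ec !size_cat /= !size_cat /=; lia.
move: ho; rewrite hsz oddD.
case Hodd: (odd (size (x :: b1))) => /= ho.
  apply: (IH (x::b1)) => //; move: hs; rewrite hsz /=; lia.
apply: (IH (x::(b2 ++ a))) => //; first (move: hs; rewrite hsz /=; lia).
Qed.

Lemma closed_even x l : path (adj E) x l -> last x l = x ->
  ~ has_odd_cycle E -> ~~ odd (size l).
Proof.
case/lastP: l => [|l' y] //; rewrite last_rcons => hp hy H.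
apply/negP => ho; apply: H.
apply: (@odd_cycle_ucycle (size (x :: l')) (x :: l')) => //=.
  by rewrite hy in hp.
by move: ho; rewrite size_rcons.
Qed.

Lemma walkP k i j : reflect
  (exists p : seq 'I_n, [/\ size p = k, path (adj E) i p & last i p = j])
  (walk_len E k i j).
Proof.
apply: (iffP existsP) => [[p /andP[hp /eqP hl]]|[p [hs hp hl]]].
  by exists (val p); rewrite size_tuple.
by exists (@Tuple k _ p (introT eqP hs)); rewrite /= hp hl eqxx.
Qed.

Lemma walk_parity a b o v : walk_len E a o v -> walk_len E b o v ->
  ~ has_odd_cycle E -> ~~ odd (a + b).
Proof.
move=> /walkP[p [hsp hp hlp]] /walkP[q [hsq hq hlq]] H.
have := @closed_even o (p ++ rev (belast o q)).
rewrite size_cat size_rev size_belast hsp hsq; apply => //.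
  rewrite cat_path hp /= hlp -hlq rev_path.
  by rewrite (eq_path (e' := adj E)) // => z w; rewrite adj_sym.
rewrite last_cat hlp -hlq.
case: q {hsq hq hlq} => [|q1 q] //=.
by rewrite rev_cons last_rcons.
Qed.

Lemma walk_dist i j : connect (adj E) i j -> walk_len E (dist E i j) i j.
Proof.
case/connectP => p hp ->.
case: (shortenP hp) => p' hp' hu _.
have hs : (size p' < n)%N.
  have := max_card (mem (i :: p')); rewrite card_ord (card_uniqP hu) /=.
  by [].
have hw : walk_len E (size p') i (last i p') by apply/walkP; exists p'.
have hh : has (fun k => walk_len E k i (last i p')) (iota 0 n).
  by apply/hasP; exists (size p'); rewrite // mem_iota.
have := nth_find 0%N hh; rewrite nth_iota; last by have := hh; rewrite has_find size_iota.
by [].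
Qed.

Variable R : realFieldType.

Lemma path_alt (y : 'I_n -> R) :
  (forall u v, adj E u v -> y u + y v = 0) ->
  forall x p, path (adj E) x p -> y (last x p) = (-1) ^+ (size p) * y x.
Proof.
move=> hy x p; elim: p x => [|z p IH] x /=; first by rewrite mul1r.
case/andP => hxz hp; rewrite IH // exprS.
have := hy _ _ hxz => h.
have -> : y z = - y x by apply/eqP; rewrite -addr_eq0 addrC h.
ring.
Qed.

Lemma walk_alt (y : 'I_n -> R) :
  (forall u v, adj E u v -> y u + y v = 0) ->
  forall k i j, walk_len E k i j -> y j = (-1) ^+ k * y i.
Proof.
move=> hy k i j /walkP[p [<- hp <-]]; exact: path_alt.
Qed.

Lemma mulM_edge (y : 'rV[R]_n) e u v : u != v -> E e = [set u; v] ->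
  (y *m incidence R E) 0 e = y 0 u + y 0 v.
Proof.
move=> huv he; rewrite !mxE (bigD1 u) //= (bigD1 v) /=; last by rewrite eq_sym.
rewrite big1 ?addr0.
  by rewrite !mxE he !inE !eqxx orbT !mulr1.
move=> j /andP[hjv hju]; rewrite mxE he !inE (negbTE hjv) (negbTE hju) /=.
by rewrite mulr0.
Qed.

Lemma kernel_adj (y : 'rV[R]_n) : y *m incidence R E = 0 ->
  forall u v, adj E u v -> y 0 u + y 0 v = 0.
Proof.
move=> hy u v /andP[huv /existsP[e /eqP he]].
by rewrite -(mulM_edge y huv he) hy mxE.
Qed.

Lemma adj_kernel (y : 'rV[R]_n) : simple_edges E ->
  (forall u v, adj E u v -> y 0 u + y 0 v = 0) -> y *m incidence R E = 0.
Proof.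
move=> [hc _] hy; apply/matrixP => i e; rewrite [in RHS]mxE.
have /cards2P[u [v [huv he]]] : #|E e| == 2%N by rewrite hc.
rewrite (ord1 i) (mulM_edge y huv he); apply: hy.
by rewrite /adj huv; apply/existsP; exists e; rewrite he.
Qed.

Lemma odd_kill (y : 'I_n -> R) :
  (forall u v, adj E u v -> y u + y v = 0) ->
  has_odd_cycle E -> connected_graph E -> forall j, y j = 0.
Proof.
move=> hy [c [/andP[hc _] h3 ho]] hconn j.
case: c hc h3 ho => [|x c'] // hc _ ho.
have hx : y x = 0.
  have := path_alt hy hc; rewrite last_rcons size_rcons -signr_odd.
  by move: ho => /= ->; rewrite /= expr1 => h; lra.
case/connectP: (hconn x j) => p hp ->.
by rewrite (path_alt hy hp) hx mulr0.
Qed.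

End Comb.

Unset Implicit Arguments. Set Strict Implicit.

Theorem mainTheorem7 (R : realFieldType) (n m : nat) (E : 'I_m -> {set 'I_n})
  (Xp : 'M[R]_(m, n)) :
  simple_edges E -> connected_graph E ->
  is_MP_inverse (incidence R E) Xp ->
  (has_odd_cycle E -> incidence R E *m Xp = 1%:M) /\
  (~ has_odd_cycle E ->
     incidence R E *m Xp =
       1%:M - (n%:R)^-1 *: \matrix_(i < n, j < n) ((-1) ^+ dist E i j)).
Proof.
move=> hse hconn [h1 _ h3 _].
set M := incidence R E.
set Q : 'M[R]_n := 1%:M - M *m Xp.
have hP : M *m Xp = 1%:M - Q by rewrite /Q opprB addrC subrK.
have QM : Q *m M = 0 by rewrite /Q mulmxBl mul1mx h1 subrr.
have Qsym : forall i j, Q i j = Q j i.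
  move=> i j; have : Q^T = Q by rewrite /Q linearB /= trmx1 h3.
  by move/matrixP => /(_ j i); rewrite mxE.
have hyQ : forall i u v, adj E u v -> Q i u + Q i v = 0.
  move=> i u v huv; have := @kernel_adj n m E R (row i Q).
  by rewrite -row_mul QM row0 => /(_ erefl u v huv); rewrite !mxE.
have hQdef : Q = 1%:M - M *m Xp by [].
clearbody Q.
split.
  move=> hodd; rewrite hP.
  have -> : Q = 0.
    apply/matrixP => i j; rewrite [RHS]mxE.
    exact: (odd_kill (hyQ i) hodd hconn).
  by rewrite subr0.
move=> hnodd; rewrite hP; apply/matrixP => i j.
rewrite !mxE; congr (_ - _).
set s : 'I_n -> R := fun v => (-1) ^+ dist E i v.
have hss : forall v, s v * s v = 1.
  by move=> v; rewrite /s -signr_odd; case: (odd _); rewrite /= ?mulrNN mulr1.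
have hsk : forall u v, adj E u v -> s u + s v = 0.
  move=> u v huv.
  have wu := walk_dist (hconn i u); have wv := walk_dist (hconn i v).
  have wu' : walk_len E (dist E i u).+1 i v.
    case/walkP: wu => p [hs hp hl]; apply/walkP; exists (rcons p v).
    by rewrite size_rcons hs rcons_path hp hl huv last_rcons.
  have := walk_parity wu' wv hnodd.
  rewrite /s -(signr_odd _ (dist E i u)) -(signr_odd _ (dist E i v)).
  rewrite oddD /=.
  by case: (odd (dist E i u)); case: (odd (dist E i v)) => //= _;
     rewrite ?expr0 ?expr1 ?subrr // addrC subrr.
have hQr : forall r v, Q r v = s v * Q r i.
  move=> r v; exact: (walk_alt (hyQ r) (walk_dist (hconn i v))).
set srow : 'rV[R]_n := \row_v s v.
have sM : srow *m M = 0.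
  apply: adj_kernel hse _ => u v huv; rewrite !mxE; exact: hsk.
have sQ : srow *m Q = srow by rewrite hQdef mulmxBr mulmx1 mulmxA sM mul0mx subr0.
have hn : (n%:R : R) != 0.
  by rewrite pnatr_eq0 -lt0n; apply: (leq_ltn_trans (leq0n i)).
have hQii : Q i i = s i / n%:R.
  have := congr1 (fun A : 'rV[R]_n => A 0 i) sQ; rewrite /= !mxE.
  under eq_bigr => r _ do rewrite mxE Qsym hQr mulrA hss mul1r.
  rewrite sumr_const card_ord => h.
  by rewrite -h -(mulr_natr (Q i i) n) mulfK.
have hsij : s i * s j = (-1) ^+ dist E i j.
  have := walk_alt hsk (walk_dist (hconn i j)) => ->.
  by rewrite /s mulrCA -/(s i) hss mulr1.
rewrite hQr hQii -hsij; field.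
exact: hn.
Qed.
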